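(* Let $P$ be a $3$-dimensional subspace of $\mathbb{R}^7$. Then the $3$-dimensional subspaces $\Lambda^2(P)$ and $\Psi(P)$ of $\Lambda^2(\mathbb{R}^7)$ are orthogonal to each other.
   Context: Equip $\mathbb{R}^7$ with its standard inner product, orientation and basis $e_1,\dots,e_7$. Let $\varphi = e_{123} - e_{167} - e_{527} - e_{563} - e_{415} - e_{426} - e_{437}$ ($e_{ijk} = e_i\wedge e_j\wedge e_k$) and $\psi = \star\varphi = e_{4567} - e_{4523} - e_{4163} - e_{4127} - e_{2637} - e_{1537} - e_{1526}$. For $u,v$: $u\wedge v$ is the 2-form $(a,b)\mapsto \langle u,a\rangle\langle v,b\rangle - \langle u,b\rangle\langle v,a\rangle$ and $\Psi_{uv}$ is the 2-form $(a,b)\mapsto\psi(u,v,a,b)$. $\Lambda^2(P) = \mathrm{Span}\{u\wedge v: u,v\in P\}$, $\Psi(P) = \mathrm{Span}\{\Psi_{uv} : u,v\in P\}$. The inner product on $\Lambda^2$ is $\langle X,Y\rangle = \sum_{i,j} X(e_i,e_j)Y(e_i,e_j)$. *)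

(* Defs.v *)
(* R^7 is modelled as row vectors 'rV[R]_7 over R : realType,
   2-forms on R^7 as 7x7 matrices X with X i j = X(e_i, e_j). *)
From HB Require Import structures.
From mathcomp Require Import all_boot all_order all_algebra.
From mathcomp Require Import reals.
Set Implicit Arguments. Unset Strict Implicit. Unset Printing Implicit Defensive.
Import Order.TTheory GRing.Theory Num.Theory.
Local Open Scope ring_scope.

Section G2.
Variable R : realType.

(* standard basis vector e_i, with 1-based index i in 1..7 *)
Definition e (i : nat) : 'rV[R]_7 := delta_mx 0 (inord i.-1).

Definition coord7 (u : 'rV[R]_7) (i : nat) : R := u 0 (inord i.-1).

Definition e4 (i j k l : nat) (a b c d : 'rV[R]_7) : R :=
  \det (\matrix_(r < 4, s < 4)
          coord7 (nth a [:: a; b; c; d] r) (nth i [:: i; j; k; l] s)).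

Definition psi (a b c d : 'rV[R]_7) : R :=
  e4 4 5 6 7 a b c d - e4 4 5 2 3 a b c d - e4 4 1 6 3 a b c d
  - e4 4 1 2 7 a b c d - e4 2 6 3 7 a b c d - e4 1 5 3 7 a b c d
  - e4 1 5 2 6 a b c d.

Definition wedge2 (u v : 'rV[R]_7) : 'M[R]_7 :=
  \matrix_(i, j) (u 0 i * v 0 j - u 0 j * v 0 i).

Definition Psi2 (u v : 'rV[R]_7) : 'M[R]_7 :=
  \matrix_(i, j) psi u v (delta_mx 0 i) (delta_mx 0 j).

Definition ip2 (X Y : 'M[R]_7) : R := \sum_(i < 7) \sum_(j < 7) X i j * Y i j.

Definition in_Lambda2 (m : nat) (P : 'M[R]_(m, 7)) (X : 'M[R]_7) : Prop :=
  exists (n : nat) (a : 'I_n -> R) (us vs : 'I_n -> 'rV[R]_7),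
    (forall k, (us k <= P)%MS) /\ (forall k, (vs k <= P)%MS) /\
    X = \sum_(k < n) a k *: wedge2 (us k) (vs k).

Definition in_PsiP (m : nat) (P : 'M[R]_(m, 7)) (Y : 'M[R]_7) : Prop :=
  exists (n : nat) (a : 'I_n -> R) (us vs : 'I_n -> 'rV[R]_7),
    (forall k, (us k <= P)%MS) /\ (forall k, (vs k <= P)%MS) /\
    Y = \sum_(k < n) a k *: Psi2 (us k) (vs k).

End G2.

(* Main.v *)
Require Import Defs.
From HB Require Import structures.
From mathcomp Require Import all_boot all_order all_algebra.
From mathcomp Require Import reals.
Set Implicit Arguments. Unset Strict Implicit. Unset Printing Implicit Defensive.
Import Order.TTheory GRing.Theory Num.Theory.
Local Open Scope ring_scope.

Section H.
Variable R : realType.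

Lemma det_lin_row n (k : 'I_n) m (c : 'I_m -> R) (B : 'I_m -> 'M[R]_n) (A : 'M[R]_n) :
  (forall t r s, r != k -> B t r s = A r s) ->
  (forall s, A k s = \sum_t c t * B t k s) ->
  \det A = \sum_t c t * \det (B t).
Proof.
move=> HB HA.
have Hc : forall t j, cofactor (B t) k j = cofactor A k j.
  move=> t j; rewrite /cofactor; congr (_ * _); congr (\det _).
  by apply/matrixP => r s; rewrite !mxE HB // eq_sym neq_lift.
under eq_bigr => t _ do rewrite (expand_det_row (B t) k) mulr_sumr.
rewrite (expand_det_row A k).
rewrite exchange_big /=; apply: eq_bigr => j _.
rewrite HA mulr_suml; apply: eq_bigr => t _. by rewrite Hc [RHS]mulrA.
Qed.

Definition E4 (i j k l : nat) (a b c d : 'rV[R]_7) : 'M[R]_4 :=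
  \matrix_(r < 4, s < 4)
          coord7 (nth a [:: a; b; c; d] r) (nth i [:: i; j; k; l] s).

Lemma coord7_sum m (x : 'I_m -> R) (cs : 'I_m -> 'rV[R]_7) n :
  coord7 (\sum_t x t *: cs t) n = \sum_t x t * coord7 (cs t) n.
Proof. by rewrite /coord7 summxE; apply: eq_bigr => t _; rewrite mxE. Qed.

Lemma e4_lin3 i j k l a b m (x : 'I_m -> R) (cs : 'I_m -> 'rV[R]_7) d :
  e4 i j k l a b (\sum_t x t *: cs t) d = \sum_t x t * e4 i j k l a b (cs t) d.
Proof.
apply: (@det_lin_row 4 (inord 2)).
  move=> t r s; rewrite !mxE.
  by case: r => [[|[|[|[|]]]]] //= ? ; rewrite /eq_op /= inordK.
move=> s; rewrite !mxE inordK //= coord7_sum; apply: eq_bigr => t _. by rewrite mxE inordK.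
Qed.

Lemma e4_lin4 i j k l a b c m (x : 'I_m -> R) (cs : 'I_m -> 'rV[R]_7) :
  e4 i j k l a b c (\sum_t x t *: cs t) = \sum_t x t * e4 i j k l a b c (cs t).
Proof.
apply: (@det_lin_row 4 (inord 3)).
  move=> t r s; rewrite !mxE.
  by case: r => [[|[|[|[|]]]]] //= ? ; rewrite /eq_op /= inordK.
move=> s; rewrite !mxE inordK //= coord7_sum; apply: eq_bigr => t _. by rewrite mxE inordK.
Qed.


Lemma psi_lin3 a b m (x : 'I_m -> R) (cs : 'I_m -> 'rV[R]_7) d :
  psi a b (\sum_t x t *: cs t) d = \sum_t x t * psi a b (cs t) d.
Proof.
rewrite /psi !e4_lin3 -!sumrB; apply: eq_bigr => t _; by rewrite !mulrBr.
Qed.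

Lemma psi_lin4 a b c m (x : 'I_m -> R) (cs : 'I_m -> 'rV[R]_7) :
  psi a b c (\sum_t x t *: cs t) = \sum_t x t * psi a b c (cs t).
Proof.
rewrite /psi !e4_lin4 -!sumrB; apply: eq_bigr => t _; by rewrite !mulrBr.
Qed.

Lemma psi_bil (u v x y : 'rV[R]_7) :
  \sum_(i < 7) \sum_(j < 7) x 0 i * y 0 j * psi u v (delta_mx 0 i) (delta_mx 0 j)
  = psi u v x y.
Proof.
rewrite [in RHS](row_sum_delta x) psi_lin3; apply: eq_bigr => i _.
rewrite [in RHS](row_sum_delta y) psi_lin4 mulr_sumr; apply: eq_bigr => j _.
by rewrite mulrA.
Qed.

Lemma ip2_wedge_Psi (w z u v : 'rV[R]_7) :
  ip2 (wedge2 w z) (Psi2 u v) = psi u v w z - psi u v z w.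
Proof.
rewrite -psi_bil -psi_bil /ip2 -sumrB. apply: eq_big => // i _.
rewrite -sumrB; apply: eq_bigr => j _.
by rewrite !mxE mulrBl [w 0 j * _]mulrC.
Qed.

Lemma ip2_suml n (a : 'I_n -> R) (W : 'I_n -> 'M[R]_7) Y :
  ip2 (\sum_k a k *: W k) Y = \sum_k a k * ip2 (W k) Y.
Proof.
rewrite /ip2.
transitivity (\sum_(i < 7) \sum_(j < 7) \sum_k a k * (W k i j * Y i j)).
  apply: eq_bigr => i _; apply: eq_bigr => j _.
  rewrite summxE big_distrl; apply: eq_bigr => k _; by rewrite mxE mulrA.
under eq_bigr => i _ do rewrite exchange_big.
rewrite exchange_big; apply: eq_bigr => k _ /=.
rewrite mulr_sumr; apply: eq_bigr => i _.
by rewrite mulr_sumr.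
Qed.

Lemma ip2C (X Y : 'M[R]_7) : ip2 X Y = ip2 Y X.
Proof. rewrite /ip2; apply: eq_bigr => i _; apply: eq_bigr => j _; exact: mulrC. Qed.

Lemma e4_P0 (P : 'M[R]_(3,7)) i j k l a b c d :
  (a <= P)%MS -> (b <= P)%MS -> (c <= P)%MS -> (d <= P)%MS ->
  e4 i j k l a b c d = 0.
Proof.
move=> /submxP[xa ->] /submxP[xb ->] /submxP[xc ->] /submxP[xd ->].
pose X : 'M[R]_(4,3) := \matrix_(r < 4, t < 3) (nth xa [:: xa; xb; xc; xd] r) 0 t.
pose Q : 'M[R]_(3,4) := \matrix_(t < 3, s < 4) P t (inord (nth i [:: i; j; k; l] s).-1).
rewrite /e4 (_ : \matrix_(r,s) _ = X *m Q); last first.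
  apply/matrixP => r s; rewrite mxE /coord7.
  case: r => [[|[|[|[|//]]]]] ? /=; rewrite !mxE; apply: eq_bigr => t _; by rewrite !mxE.
apply/eqP; apply: contraT => H.
have : X *m Q \in unitmx by rewrite unitmxE unitfE.
move/mxrank_unit => Hr.
have h1 := mxrankM_maxl X Q; rewrite Hr in h1.
have h2 := rank_leq_col X.
by have := leq_trans h1 h2.
Qed.

Lemma psi_P0 (P : 'M[R]_(3,7)) a b c d :
  (a <= P)%MS -> (b <= P)%MS -> (c <= P)%MS -> (d <= P)%MS ->
  psi a b c d = 0.
Proof.
move=> Ha Hb Hc Hd; rewrite /psi !(e4_P0 _ _ _ _ Ha Hb Hc Hd).
by rewrite !subr0.
Qed.

End H.
Unset Implicit Arguments. Set Strict Implicit.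

Theorem lemma4p4 (R : realType) (P : 'M[R]_(3, 7)) :
  \rank P = 3%N ->
  forall X Y : 'M[R]_7,
    in_Lambda2 P X -> in_PsiP P Y -> ip2 X Y = 0.
Proof.
move=> _ X Y [n [a [us [vs [Hu [Hv ->]]]]]] [m [b [ws [zs [Hw [Hz ->]]]]]].
rewrite ip2_suml big1 // => k _.
rewrite ip2C ip2_suml big1 ?mulr0 // => l _.
rewrite ip2C ip2_wedge_Psi (psi_P0 (Hw l) (Hz l) (Hu k) (Hv k)).
by rewrite (psi_P0 (Hw l) (Hz l) (Hv k) (Hu k)) subrr mulr0.
Qed.
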